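(* Let $\hat V$ be the $(1+\chi)\times(1+\chi)$ upper-left block of an iMPO in regular form, and let $R_0:=\mathrm{Id}_{1+\chi}$, $\hat V_0:=\hat V$, and for $n\ge1$ let $\hat V_{n-1}=\hat Q_nR_n$ be a QR decomposition, $\hat V_n:=R_n\hat Q_n$, $L_n:=R_n\cdots R_1$ ($L_0:=\mathrm{Id}$). Then for every $n\ge0$, $$\mathrm{Id}_{1+\chi}\,(T_V)^n=L_n^\dagger L_n.$$
   Context: $\mathcal A$ is the algebra of operators on $\mathbb C^q$ with inner product $\langle\hat A,\hat B\rangle=\mathrm{Tr}[\hat A^\dagger\hat B]/\mathrm{Tr}[\hat 1]$ and orthonormal basis $\{\hat O_\alpha\}$, $\hat O_0=\hat 1$. For an operator-valued matrix $\hat V=\sum_\alpha\hat O_\alpha V_\alpha$ ($(V_\alpha)_{ab}=\langle\hat O_\alpha,\hat V_{ab}\rangle$), the transfer matrix acts on square complex matrices from the left by $XT_V=\sum_\alpha V_\alpha^\dagger XV_\alpha$. An iMPO in regular form of bond dimension $\chi$ is a $(\chi+2)\times(\chi+2)$ matrix with entries in $\mathcal A$ of block form $\begin{pmatrix}\hat 1&\hat{\mathbf c}&\hat d\\0&\hat{\mathsf A}&\hat{\mathbf b}\\0&0&\hat 1\end{pmatrix}$ whose upper-left block is $\hat V=\begin{pmatrix}\hat 1&\hat{\mathbf c}\\0&\hat{\mathsf A}\end{pmatrix}$. A QR decomposition $\hat V=\hat QR$ has $\hat Q$ operator-valued with orthonormal columns, $\sum_a\langle\hat Q_{ab},\hat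 Q_{ac}\rangle=\delta_{bc}$ (equivalently $\sum_\alpha Q_\alpha^\dagger Q_\alpha=\mathrm{Id}$), and $R$ a complex upper-triangular matrix. *)

(* Defs.v *)
From HB Require Import structures.
From mathcomp Require Import all_boot all_order all_algebra.
Set Implicit Arguments. Unset Strict Implicit. Unset Printing Implicit Defensive.
Import Order.TTheory GRing.Theory Num.Theory.
Local Open Scope ring_scope.

Section Defs.
Variable C : numClosedFieldType.

Definition hc m n (A : 'M[C]_(m, n)) : 'M[C]_(n, m) := (map_mx Num.conj A)^T.

Definition opip q (A B : 'M[C]_q) : C := \tr (hc A *m B) / \tr (1%:M : 'M[C]_q).

Definition onbasis q (O : 'I_(q * q) -> 'M[C]_q) : Prop :=
  (forall al be, opip (O al) (O be) = (al == be)%:R) /\ exists al0, O al0 = 1%:M.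

Definition compmx q m n (O : 'I_(q * q) -> 'M[C]_q) (V : 'M['M[C]_q]_(m, n)) al
  : 'M[C]_(m, n) := \matrix_(a, b) opip (O al) (V a b).

(* transfer matrix acting from the left: X T_V = sum_alpha V_alpha^dagger X V_alpha *)
Definition transfer q n (O : 'I_(q * q) -> 'M[C]_q) (V : 'M['M[C]_q]_n)
  (X : 'M[C]_n) : 'M[C]_n :=
  \sum_al hc (compmx O V al) *m X *m compmx O V al.

Definition opmulr q m n p (Q : 'M['M[C]_q]_(m, n)) (R : 'M[C]_(n, p))
  : 'M['M[C]_q]_(m, p) := \matrix_(a, b) \sum_c R c b *: Q a c.

Definition opmull q m n p (R : 'M[C]_(m, n)) (Q : 'M['M[C]_q]_(n, p))
  : 'M['M[C]_q]_(m, p) := \matrix_(a, b) \sum_c R a c *: Q c b.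

Definition orthocols q m n (Q : 'M['M[C]_q]_(m, n)) : Prop :=
  forall b c, \sum_a opip (Q a b) (Q a c) = (b == c)%:R.

Definition uppertri n (R : 'M[C]_n) : Prop :=
  forall i j : 'I_n, (j < i)%N -> R i j = 0.

Definition regular_block q chi (V : 'M['M[C]_q]_chi.+1) : Prop :=
  V ord0 ord0 = 1%:M /\ forall a : 'I_chi.+1, a != ord0 -> V a ord0 = 0.

Definition Vseq q n (V : 'M['M[C]_q]_n) (Qs : nat -> 'M['M[C]_q]_n)
  (Rs : nat -> 'M[C]_n) (k : nat) : 'M['M[C]_q]_n :=
  if k is k'.+1 then opmull (Rs k) (Qs k) else V.

Fixpoint Lseq n (Rs : nat -> 'M[C]_n) (k : nat) : 'M[C]_n :=
  if k is k'.+1 then Rs k *m Lseq Rs k' else 1%:M.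

End Defs.

(* Main.v *)
Require Import Defs.
From HB Require Import structures.
From mathcomp Require Import all_boot all_order all_algebra.
Import Order.TTheory GRing.Theory Num.Theory.
Local Open Scope ring_scope.

Section Helpers.
Variable C : numClosedFieldType.

Lemma hcM m n p (A : 'M[C]_(m, n)) (B : 'M[C]_(n, p)) :
  hc (A *m B) = hc B *m hc A.
Proof. by rewrite /hc map_mxM trmx_mul. Qed.

Lemma hcE m n (A : 'M[C]_(m, n)) i j : hc A i j = (A j i)^*.
Proof. by rewrite /hc !mxE. Qed.

Lemma hc_sum m n (I : finType) (F : I -> 'M[C]_(m, n)) :
  hc (\sum_i F i) = \sum_i hc (F i).
Proof.
apply/matrixP => i j; rewrite hcE !summxE rmorph_sum.
by apply: eq_bigr => k _; rewrite hcE.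
Qed.

Lemma opipE q (A B : 'M[C]_q) :
  opip A B = (\sum_i \sum_j (A j i)^* * B j i) / \tr (1%:M : 'M[C]_q).
Proof.
rewrite /opip; congr (_ / _); rewrite /mxtrace; apply: eq_bigr => i _.
by rewrite mxE; apply: eq_bigr => j _; rewrite hcE.
Qed.

Lemma opip_conj q (A B : 'M[C]_q) : opip B A = (opip A B)^*.
Proof.
rewrite !opipE rmorphM fmorphV.
rewrite mxtrace1 rmorph_nat; congr (_ / _).
rewrite rmorph_sum; apply: eq_bigr => i _; rewrite rmorph_sum.
by apply: eq_bigr => j _; rewrite rmorphM /= conjCK mulrC.
Qed.

Lemma opip_sumr q (I : finType) (A : 'M[C]_q) (k : I -> C) (B : I -> 'M[C]_q) :
  opip A (\sum_c k c *: B c) = \sum_c k c * opip A (B c).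
Proof.
rewrite opipE; under [RHS]eq_bigr do rewrite opipE mulrA.
rewrite -big_distrl /=; congr (_ / _).
under [RHS]eq_bigr do rewrite mulr_sumr.
rewrite [RHS]exchange_big /=; apply: eq_bigr => i _.
under [RHS]eq_bigr do rewrite mulr_sumr.
rewrite [RHS]exchange_big /=; apply: eq_bigr => j _.
rewrite summxE mulr_sumr; apply: eq_bigr => c _.
by rewrite mxE mulrCA.
Qed.

Lemma opip0 q (A : 'M[C]_q) : opip A 0 = 0.
Proof.
rewrite opipE big1 ?mul0r // => i _; rewrite big1 // => j _.
by rewrite mxE mulr0.
Qed.

Lemma expand q (O : 'I_(q * q) -> 'M[C]_q) : onbasis O ->
  forall B : 'M[C]_q, B = \sum_al opip (O al) B *: O al.
Proof.
move=> [ON _] B.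
pose X := [tuple O i | i < q * q].
have XE : forall i : 'I_(q * q), X`_i = O i.
  by move=> i; rewrite -tnth_nth tnth_mktuple.
have orth : forall (k : 'I_(q * q) -> C) be,
    opip (O be) (\sum_i k i *: O i) = k be.
  move=> k be; rewrite opip_sumr (bigD1 be) //= ON eqxx mulr1 big1 ?addr0 //.
  by move=> i /negbTE ne; rewrite ON eq_sym ne mulr0.
have freeX : free X.
  apply/freeP => k kX i.
  have := orth k i.
  under eq_bigr do rewrite -XE.
  by rewrite kX opip0 => <-.
have inX : B \in <<X>>%VS.
  have -> : <<X>>%VS = fullv.
    apply/eqP; rewrite eqEdim subvf /=.
    by rewrite dimvf dim_matrix (eqP freeX) size_tuple.
  exact: memvf.
have BE : B = \sum_i coord X i B *: O i.
  by rewrite {1}(coord_span inX); apply: eq_bigr => i _; rewrite XE.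
apply: (etrans BE); apply: eq_bigr => al _.
by rewrite {2}BE orth.
Qed.

Lemma parseval q (O : 'I_(q * q) -> 'M[C]_q) : onbasis O ->
  forall A B : 'M[C]_q,
  opip A B = \sum_al (opip (O al) A)^* * opip (O al) B.
Proof.
move=> hO A B; rewrite {1}(@expand q O hO B) opip_sumr.
by apply: eq_bigr => al _; rewrite mulrC opip_conj.
Qed.


Lemma compmx_opmulr q m n (O : 'I_(q * q) -> 'M[C]_q) (Q : 'M['M[C]_q]_(m, n))
  (R : 'M[C]_n) al : compmx O (opmulr Q R) al = compmx O Q al *m R.
Proof.
apply/matrixP => a b; rewrite !mxE opip_sumr.
by apply: eq_bigr => c _; rewrite !mxE mulrC.
Qed.

Lemma compmx_opmull q m n (O : 'I_(q * q) -> 'M[C]_q) (R : 'M[C]_m)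
  (Q : 'M['M[C]_q]_(m, n)) al : compmx O (opmull R Q) al = R *m compmx O Q al.
Proof.
apply/matrixP => a b; rewrite !mxE opip_sumr.
by apply: eq_bigr => c _; rewrite !mxE.
Qed.

Lemma transfer_ortho q n (O : 'I_(q * q) -> 'M[C]_q) (Q : 'M['M[C]_q]_n) :
  onbasis O -> orthocols Q -> transfer O Q 1%:M = 1%:M.
Proof.
move=> hO hQ; apply/matrixP => b c; rewrite /transfer summxE [RHS]mxE -hQ.
under eq_bigr do rewrite mulmx1 mxE.
rewrite exchange_big /=; apply: eq_bigr => a _.
rewrite (@parseval q O hO); apply: eq_bigr => al _.
by rewrite hcE !mxE.
Qed.

End Helpers.

Theorem lemma6 (C : numClosedFieldType) (q chi : nat) (hq : (0 < q)%N)
  (O : 'I_(q * q) -> 'M[C]_q) (V : 'M['M[C]_q]_chi.+1)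
  (Qs : nat -> 'M['M[C]_q]_chi.+1) (Rs : nat -> 'M[C]_chi.+1) :
  onbasis O ->
  regular_block V ->
  Rs 0%N = 1%:M ->
  (forall n : nat,
      Vseq V Qs Rs n = opmulr (Qs n.+1) (Rs n.+1) /\
      orthocols (Qs n.+1) /\ uppertri (Rs n.+1)) ->
  forall n : nat, iter n (transfer O V) 1%:M = hc (Lseq Rs n) *m Lseq Rs n.
Proof.
move=> hO _ _ H.
pose W k := Vseq V Qs Rs k.
have Wc : forall k al, compmx O (W k) al = compmx O (Qs k.+1) al *m Rs k.+1.
  by move=> k al; rewrite /W (proj1 (H k)) compmx_opmulr.
have WcS : forall k al, compmx O (W k.+1) al = Rs k.+1 *m compmx O (Qs k.+1) al.
  by move=> k al; rewrite /W /= compmx_opmull.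
have LV : forall k al, Lseq Rs k *m compmx O V al = compmx O (W k) al *m Lseq Rs k.
  elim=> [|k IH] al; first by rewrite /= mul1mx mulmx1.
  rewrite /= -mulmxA IH Wc WcS !mulmxA.
  done.
have TW : forall k, transfer O (W k) 1%:M = hc (Rs k.+1) *m Rs k.+1.
  move=> k; rewrite /transfer.
  under eq_bigr do rewrite Wc hcM mulmx1 mulmxA -(mulmxA (hc _)) -mulmxA.
  rewrite -mulmx_sumr -mulmx_suml.
  have := @transfer_ortho C q _ O _ hO (proj1 (proj2 (H k))).
  rewrite /transfer; under eq_bigr do rewrite mulmx1.
  by move=> ->; rewrite mul1mx.
elim=> [|n IH]; first by rewrite /= /hc map_mx1 trmx1 mulmx1.
rewrite iterS IH /= /transfer.
under eq_bigr do rewrite (mulmxA (hc _)) -hcM -mulmxA LV hcM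
  !mulmxA -(mulmxA (hc (Lseq Rs n))).
rewrite -mulmx_suml -mulmx_sumr.
have := TW n; rewrite /transfer; under eq_bigr do rewrite mulmx1.
by move=> ->; rewrite hcM !mulmxA.
Qed.
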